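(* Fix a state $s$, a utility $u:\mathcal S\times\Omega\times\mathcal A\to[0,1]$, a function $Q:\mathcal S\times\Omega\times\mathcal A\to[0,H]$ and priors $\mu_1,\mu_2\in\Delta(\Omega)$, and let $\mathcal B_{1,2}=\mathbb B(\mu_1,\|\mu_1-\mu_2\|_1)$. Then $$\max_{\pi_1\in\mathrm{Pers}(\mu_1,u)}\langle Q,\mu_1\otimes\pi_1\rangle(s)-\max_{\pi_2\in\mathrm{Pers}(\mu_2,u)}\langle Q,\mu_2\otimes\pi_2\rangle(s)\le\mathrm{Gap}(s,\mu_1,\mathcal B_{1,2};Q)+\frac H2\|\mu_1-\mu_2\|_1.$$
   Context: $\mathcal A$ is a finite action set, $\mathcal S$ a state space and $\Omega$ an outcome space; $\Delta(\Omega)$ is the set of probability distributions on $\Omega$ (with densities/mass functions $\mu(\omega)$), and $\|\mu-\mu'\|_1=\int_\Omega|\mu(\omega)-\mu'(\omega)|\,\mathrm d\omega$. A signaling scheme $\pi$ assigns to each $(s,\omega)$ a distribution $\pi(\cdot\mid s,\omega)\in\Delta(\mathcal A)$. For a prior $\mu$ and utility $u$, $\mathrm{Pers}(\mu,u)$ is the set of $\pi$ with $\int_\Omega\mu(\omega)\pi(a\mid s,\omega)[u(s,\omega,a)-u(s,\omega,a')]\,\mathrm d\omega\ge0$ for all $a,a'\in\mathcal A$ and states $s$; for a set $\mathcal B\subseteq\Delta(\Omega)$, $\mathrm{Pers}(\mathcal B,u)=\bigcap_{\mu'\in\mathcal B}\mathrm{Pers}(\mu',u)$. $\langle Q,\mu\otimes\pi\rangle(s)=\mathbb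 E_{\omega\sim\mu,\,a\sim\pi(\cdot\mid s,\omega)}[Q(s,\omega,a)]$. The robustness gap is $\mathrm{Gap}(s,\mu,\mathcal B;Q)=\max_{\pi\in\mathrm{Pers}(\mu,u)}\langle Q,\mu\otimes\pi\rangle(s)-\max_{\pi\in\mathrm{Pers}(\mathcal B,u)}\langle Q,\mu\otimes\pi\rangle(s)$. $\mathbb B(\mu,\epsilon)=\{\mu'\in\Delta(\Omega):\|\mu-\mu'\|_1\le\epsilon\}$. *)

(* Defs.v *)
From HB Require Import structures.
From mathcomp Require Import all_boot all_order all_algebra.
From mathcomp Require Import all_classical all_reals all_analysis.
Set Implicit Arguments. Unset Strict Implicit. Unset Printing Implicit Defensive.
Import Order.TTheory GRing.Theory Num.Theory.
Local Open Scope classical_set_scope.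
Local Open Scope ring_scope.

Section Persuasion.
Context {R : realType} {d : measure_display} {Omega : measurableType d}
  (lam : {measure set Omega -> \bar R}) {S : Type} {A : finType}.

Definition is_prior (mu : Omega -> R) : Prop :=
  [/\ measurable_fun setT mu, (forall w, 0 <= mu w)
    & (\int[lam]_w (mu w)%:E = 1)%E].

Definition L1dist (mu mu' : Omega -> R) : \bar R :=
  (\int[lam]_w (`|mu w - mu' w|)%:E)%E.

Definition L1ball (mu : Omega -> R) (eps : \bar R) : set (Omega -> R) :=
  [set mu' | is_prior mu' /\ (L1dist mu mu' <= eps)%E].

Definition is_scheme (pi : S -> Omega -> A -> R) : Prop :=
  forall s, [/\ (forall a, measurable_fun setT (fun w => pi s w a)),
    (forall w a, 0 <= pi s w a) & (forall w, \sum_(a : A) pi s w a = 1)].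

Definition Pers (mu : Omega -> R) (u : S -> Omega -> A -> R)
  (pi : S -> Omega -> A -> R) : Prop :=
  is_scheme pi /\ forall s (a a' : A),
    (0 <= \int[lam]_w (mu w * pi s w a * (u s w a - u s w a'))%:E)%E.

Definition PersSet (B : set (Omega -> R)) (u : S -> Omega -> A -> R)
  (pi : S -> Omega -> A -> R) : Prop :=
  is_scheme pi /\ forall mu', B mu' -> Pers mu' u pi.

Definition value (Q : S -> Omega -> A -> R) (mu : Omega -> R)
  (pi : S -> Omega -> A -> R) (s : S) : \bar R :=
  (\int[lam]_w (mu w * \sum_(a : A) pi s w a * Q s w a)%:E)%E.

Definition optPers (Q u : S -> Omega -> A -> R) (mu : Omega -> R) (s : S) : \bar R :=
  ereal_sup [set value Q mu pi s | pi in Pers mu u].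

Definition optPersSet (Q u : S -> Omega -> A -> R) (mu : Omega -> R)
  (B : set (Omega -> R)) (s : S) : \bar R :=
  ereal_sup [set value Q mu pi s | pi in PersSet B u].

Definition Gap (u : S -> Omega -> A -> R) (s : S) (mu : Omega -> R)
  (B : set (Omega -> R)) (Q : S -> Omega -> A -> R) : \bar R :=
  (optPers Q u mu s - optPersSet Q u mu B s)%E.

End Persuasion.

(* Main.v *)
Require Import Defs.
From HB Require Import structures.
From mathcomp Require Import all_boot all_order all_algebra.
From mathcomp Require Import all_classical all_reals all_analysis.
From mathcomp Require Import measurable_realfun. From mathcomp Require Import lra.
Import Order.TTheory GRing.Theory Num.Theory.
Local Open Scope classical_set_scope.
Local Open Scope ring_scope.

Lemma key (R : realType) (d : measure_display) (Omega : measurableType d)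
  (lam : {measure set Omega -> \bar R}) (S : Type) (A : finType)
  (s : S) (Q : S -> Omega -> A -> R) (H : R) (mu1 mu2 : Omega -> R)
  (pi : S -> Omega -> A -> R) :
  0 <= H ->
  (forall s' w a, 0 <= Q s' w a <= H) ->
  (forall s' a, measurable_fun setT (fun w => Q s' w a)) ->
  is_prior lam mu1 -> is_prior lam mu2 -> is_scheme pi ->
  (value lam Q mu1 pi s <= value lam Q mu2 pi s + (H / 2)%:E * L1dist lam mu1 mu2)%E.
Proof.
move=> H0 HQ mQ [m1 p1 i1] [m2 p2 i2] /(_ s) [mpi ppi spi].
set f := fun w => \sum_(a : A) pi s w a * Q s w a.
have mf : measurable_fun setT f.
  apply: measurable_sum => a; apply: measurable_funM => //.
have f0 : forall w, 0 <= f w.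
  move=> w; apply: sumr_ge0 => a _; apply: mulr_ge0 => //; by case/andP: (HQ s w a).
have fH : forall w, f w <= H.
  move=> w; rewrite /f -[H]mul1r -(spi w) mulr_suml; apply: ler_sum => a _.
  apply: ler_wpM2l => //; by case/andP: (HQ s w a).
have h0 : 0 <= H / 2 by apply: divr_ge0.
have mE : forall g : Omega -> R, measurable_fun setT g -> measurable_fun setT (fun w => (g w)%:E).
  by move=> g mg; apply/measurable_EFinP.
have mn : measurable_fun setT (fun w => `|mu1 w - mu2 w|).
  apply: measurableT_comp => //; exact: measurable_funB.
have key : (\int[lam]_w ((mu1 w * f w)%:E + (H/2)%:E * (mu2 w)%:E)
   <= \int[lam]_w ((mu2 w * f w)%:E + ((H/2)%:E * (mu1 w)%:E + (H/2)%:E * (`|mu1 w - mu2 w|)%:E)))%E.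
  apply: ge0_le_integral => //.
  - move=> w _; apply: adde_ge0; rewrite ?lee_fin ?mulr_ge0 //.
  - apply: emeasurable_funD; first by apply: mE; apply: measurable_funM.
    by apply: emeasurable_funM => //; apply: mE.
  - apply: emeasurable_funD; first by apply: mE; apply: measurable_funM.
    by apply: emeasurable_funD; apply: emeasurable_funM => //; apply: mE.
  move=> w _; rewrite -!EFinM -!EFinD lee_fin.
  have := fH w; have := f0 w; have := p1 w; have := p2 w.
  case: (lerP (mu2 w) (mu1 w)) => h.
    move=> *; nra.
  move=> *; nra.
rewrite ge0_integralD // in key; last 4 first.
- by move=> w _; rewrite lee_fin mulr_ge0.
- by apply: mE; apply: measurable_funM.
- by move=> w _; rewrite -EFinM lee_fin mulr_ge0.
- by apply: emeasurable_funM => //; apply: mE.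
rewrite ge0_integralD // in key; last 4 first.
- by move=> w _; rewrite lee_fin mulr_ge0.
- by apply: mE; apply: measurable_funM.
- by move=> w _; apply: adde_ge0; rewrite -EFinM lee_fin mulr_ge0.
- by apply: emeasurable_funD; apply: emeasurable_funM => //; apply: mE.
rewrite ge0_integralD // in key; last 4 first.
- by move=> w _; rewrite -EFinM lee_fin mulr_ge0.
- by apply: emeasurable_funM => //; apply: mE.
- by move=> w _; rewrite -EFinM lee_fin mulr_ge0.
- by apply: emeasurable_funM => //; apply: mE.
have hZ : forall g : Omega -> R, measurable_fun setT g -> (forall w, 0 <= g w) ->
  (\int[lam]_w ((H/2)%:E * (g w)%:E) = (H/2)%:E * \int[lam]_w (g w)%:E)%E.
  move=> g mg g0; apply: ge0_integralZl => //; first exact: mE; by move=> w _; rewrite lee_fin.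
rewrite !hZ // in key.
rewrite i1 i2 mule1 addeCA in key.
rewrite /value -/f.
rewrite [X in (_ <= X)%E]addeC in key.
by rewrite leeD2rE // in key.
Qed.

Lemma valH (R : realType) (d : measure_display) (Omega : measurableType d)
  (lam : {measure set Omega -> \bar R}) (S : Type) (A : finType)
  (s : S) (Q : S -> Omega -> A -> R) (H : R) (mu : Omega -> R)
  (pi : S -> Omega -> A -> R) :
  0 <= H ->
  (forall s' w a, 0 <= Q s' w a <= H) ->
  (forall s' a, measurable_fun setT (fun w => Q s' w a)) ->
  is_prior lam mu -> is_scheme pi ->
  (value lam Q mu pi s <= H%:E)%E.
Proof.
move=> H0 HQ mQ [m1 p1 i1] /(_ s) [mpi ppi spi].
set f := fun w => \sum_(a : A) pi s w a * Q s w a.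
have mf : measurable_fun setT f.
  apply: measurable_sum => a; apply: measurable_funM => //.
have f0 : forall w, 0 <= f w.
  move=> w; apply: sumr_ge0 => a _; apply: mulr_ge0 => //; by case/andP: (HQ s w a).
have fH : forall w, f w <= H.
  move=> w; rewrite /f -[H]mul1r -(spi w) mulr_suml; apply: ler_sum => a _.
  apply: ler_wpM2l => //; by case/andP: (HQ s w a).
have mE : forall g : Omega -> R, measurable_fun setT g -> measurable_fun setT (fun w => (g w)%:E).
  by move=> g mg; apply/measurable_EFinP.
rewrite /value -/f.
apply: (@le_trans _ _ (\int[lam]_w (H%:E * (mu w)%:E))%E).
  apply: ge0_le_integral => //.
  - by move=> w _; rewrite lee_fin; apply: mulr_ge0 => //; exact: f0.
  - by apply: (mE (fun w => mu w * f w)); apply: measurable_funM.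
  - by apply: emeasurable_funM => //; apply: mE.
  move=> w _; rewrite -EFinM lee_fin mulrC ler_wpM2r //; exact: fH.
rewrite ge0_integralZl //; first by rewrite i1 mule1.
- exact: mE.
- by move=> w _; rewrite lee_fin.
Qed.

Lemma efact (R : realType) (x1 x2 y c : \bar R) : x1 != +oo%E -> x2 != +oo%E -> y != +oo%E ->
  (0 <= c)%E -> (y <= x2 + c)%E -> (x1 - x2 <= (x1 - y) + c)%E.
Proof.
case: x1 => [r1||] //; case: x2 => [r2||] //; case: y => [r3||] //; case: c => [r4||] //= _ _ _.
all: rewrite ?lee_fin.
- lra.
all: move=> *; rewrite ?addey ?addye // ?leey //.
Qed.

Theorem mainTheorem9 (R : realType) (d : measure_display) (Omega : measurableType d)
  (lam : {measure set Omega -> \bar R}) (S : Type) (A : finType) (a0 : A)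
  (s : S) (u Q : S -> Omega -> A -> R) (H : R) (mu1 mu2 : Omega -> R) :
  (forall s' w a, 0 <= u s' w a <= 1) ->
  (forall s' a, measurable_fun setT (fun w => u s' w a)) ->
  (forall s' w a, 0 <= Q s' w a <= H) ->
  (forall s' a, measurable_fun setT (fun w => Q s' w a)) ->
  is_prior lam mu1 -> is_prior lam mu2 ->
  (optPers lam Q u mu1 s - optPers lam Q u mu2 s <=
   Gap lam u s mu1 (L1ball lam mu1 (L1dist lam mu1 mu2)) Q
   + (H / 2)%:E * L1dist lam mu1 mu2)%E.
Proof.
move=> Hu mu HQ mQ P1 P2.
have H0 : 0 <= H.
  have [[w _]|hn] := pselect (exists w : Omega, True); last first.
    have E : [set: Omega] = set0.
      by apply/seteqP; split => x // _; apply: hn; exists x.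
    case: P1 => _ _; rewrite -/(integral lam setT _) E integral_set0 => /eqP.
    by rewrite eqe eq_sym oner_eq0.
  by case/andP: (HQ s w a0) => h1 h2; apply: le_trans h2.
have fin : forall mu, is_prior lam mu -> (optPers lam Q u mu s <= H%:E)%E.
  move=> mu' P; apply: ge_ereal_sup => _ [pi [Spi _] <-].
  exact: valH.
have noinf : forall x : \bar R, (x <= H%:E)%E -> x != +oo%E.
  by move=> [r||].
apply: efact.
- exact/noinf/fin.
- exact/noinf/fin.
- apply/noinf; apply: ge_ereal_sup => _ [pi [Spi _] <-]; exact: valH.
- apply: mule_ge0; first by rewrite lee_fin divr_ge0.
  by apply: integral_ge0 => w _; rewrite lee_fin.
apply: ge_ereal_sup => _ [pi [Spi Ppi] <-].
have P2pi : Pers lam mu2 u pi by apply: Ppi; split.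
apply: le_trans (@key _ _ _ lam _ _ s Q H mu1 mu2 pi H0 HQ mQ P1 P2 Spi) _.
apply: leeD2r; apply: ereal_sup_ubound; by exists pi.
Qed.
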